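(* Let $R$ be a commutative Noetherian ring with unity and let $y\in R$ be a nonzero zero divisor. If $\deg[y]>\deg[x]$ for every vertex $[x]\neq[y]$ of $\Gamma_E(R)$, then $\operatorname{ann}(y)$ is a maximal element of $\mathfrak F=\{\operatorname{ann}(z)\mid 0\neq z\in R\}$, and hence is an associated prime of $R$.
   Context: For $x,y\in R$ write $x\sim y$ iff $\operatorname{ann}(x)=\operatorname{ann}(y)$; $[x]$ denotes the equivalence class of $x$. Let $Z^*(R)$ be the set of nonzero zero divisors of $R$. The graph $\Gamma_E(R)$ is the simple graph whose vertices are the classes $[x]$ with $x\in Z^*(R)$, two distinct vertices $[x],[y]$ being adjacent iff $xy=0$. The degree of a vertex is the number of vertices adjacent to it. An associated prime of $R$ is a prime ideal of the form $\operatorname{ann}(y)$, $y\in R$. *)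

(* Defs.v *)
From mathcomp Require Import all_boot all_order all_algebra.
From mathcomp Require Import boolp classical_sets cardinality.
Set Implicit Arguments. Unset Strict Implicit. Unset Printing Implicit Defensive.
Import GRing.Theory.
Local Open Scope ring_scope.
Local Open Scope classical_set_scope.

Section Defs.
Variable R : comNzRingType.

Definition is_ideal (I : set R) : Prop :=
  I 0 /\ (forall a b, I a -> I b -> I (a + b)) /\ (forall r a, I a -> I (r * a)).

Definition is_prime_ideal (I : set R) : Prop :=
  is_ideal I /\ ~ I 1 /\ (forall a b, I (a * b) -> I a \/ I b).

Definition noetherian : Prop :=
  forall I : nat -> set R, (forall n, is_ideal (I n)) ->
    (forall n, I n `<=` I n.+1) -> exists N, forall n, (N <= n)%N -> I n = I N.

Definition ann (x : R) : set R := [set r | x * r = 0].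

Definition zero_divisor (x : R) : Prop := exists z, z != 0 /\ x * z = 0.

Definition nz_zero_divisor (x : R) : Prop := x != 0 /\ zero_divisor x.

Definition eclass (x : R) : set R := [set w | ann w = ann x].

Definition vertex (C : set R) : Prop := exists x, nz_zero_divisor x /\ C = eclass x.

Definition adjacent (C D : set R) : Prop :=
  C <> D /\ exists x y, C x /\ D y /\ x * y = 0.

(* neighbourhood of a vertex; its cardinal is the degree *)
Definition nbhd (C : set R) : set (set R) := [set D | vertex D /\ adjacent C D].

Definition deg_lt (C D : set R) : Prop :=
  (nbhd C #<= nbhd D)%card /\ ~ (nbhd D #<= nbhd C)%card.

Definition maximal_ann (y : R) : Prop :=
  y != 0 /\ forall z, z != 0 -> ann y `<=` ann z -> ann z = ann y.

Definition associated_prime (P : set R) : Prop :=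
  is_prime_ideal P /\ exists y, P = ann y.

End Defs.

(* Main.v *)
Require Import Defs.
From mathcomp Require Import all_boot all_order all_algebra.
From mathcomp Require Import boolp classical_sets cardinality.
Local Open Scope ring_scope.
Import GRing.Theory.
Local Open Scope classical_set_scope.

Lemma inj_le_aux (T U : Type) (A : set T) (B : set U) (f : T -> U) :
  {in A &, injective f} -> (forall x, A x -> B (f x)) -> (A #<= B)%card.
Proof.
move=> Hi Hf.
have /card_eqPle [_ h] := inj_card_eq Hi.
apply: card_le_trans h (subset_card_le _).
by move=> _ [x Ax <-]; apply: Hf.
Qed.

Lemma eclass_eq (R : comNzRingType) (a b : R) :
  eclass a = eclass b -> ann a = ann b.
Proof.
move=> e. have : eclass a a by [].
by rewrite e.
Qed.

Theorem proposition3p1 (R : comNzRingType) (y : R) :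
  noetherian R -> nz_zero_divisor y ->
  (forall C : set R, vertex C -> C <> eclass y -> deg_lt C (eclass y)) ->
  maximal_ann y /\ associated_prime (ann y).
Proof.
move=> _ [y0 [w [w0 yw]]] Hdeg.
have Hmax : maximal_ann y.
  split=> // z z0 sub.
  apply/eqP/negPn/negP => /eqP neq.
  have Vz : vertex (eclass z).
    by exists z; split=> //; split=> //; exists w; split=> //; exact: sub.
  have Nz : eclass z <> eclass y by move/eclass_eq.
  have [_ Hn] := Hdeg _ Vz Nz.
  apply: Hn.
  pose f (D : set R) := if pselect (D = eclass z) is left _ then eclass y else D.
  apply: (@inj_le_aux _ _ _ _ f).
  - move=> D1 D2; rewrite !inE /f => -[_ [N1 _]] [_ [N2 _]].
    case: pselect => [e1|n1]; case: pselect => [e2|n2].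
    + by rewrite e1 e2.
    + by move=> e; exfalso; apply: N2.
    + by move=> e; exfalso; apply: N1.
    + by [].
  - move=> D [VD [ND [x [u [xC [uD xu]]]]]].
    rewrite /f; case: pselect => [eD|nD].
    + split; first by exists y; split=> //; split=> //; exists w.
      split; first by move=> e; apply: Nz.
      exists u, x; split; first by rewrite -eD.
      by split=> //; rewrite mulrC.
    + split=> //; split; first by move=> e; apply: nD.
      exists z, u; split=> //; split=> //.
      apply: sub; rewrite -xC; exact: xu.
split=> //; split; last by exists y.
have [_ Hm] := Hmax.
split; last split.
- split; first by rewrite /ann /= mulr0.
  split; first by move=> a b; rewrite /ann /= => ha hb; rewrite mulrDr ha hb addr0.
  by move=> r a; rewrite /ann /= => ha; rewrite mulrCA ha mulr0.
- by rewrite /ann /= mulr1 => /eqP; rewrite (negbTE y0).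
- move=> a b; rewrite /ann /= => hab.
  have [ya|ya] := eqVneq (y * a) 0; first by left.
  right.
  have e : ann (y * a) = ann y.
    apply: (Hm _ ya) => r hr. rewrite /ann /= in hr *. by rewrite -mulrA mulrCA hr mulr0.
  have hb : ann (y * a) b by rewrite /ann /= -mulrA; exact: hab.
  rewrite e in hb; exact: hb.
Qed.
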